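(* Let $n\ge 4$ and $a$ be positive integers with $2a\le n$. Then $S_{\mathcal{Q}}(K_{a,n-a})\ge S_{\mathcal{Q}}(K_{\lfloor n/2\rfloor,\lceil n/2\rceil})$, with equality if and only if $K_{a,n-a}\cong K_{\lfloor n/2\rfloor,\lceil n/2\rceil}$ (i.e. $a=\lfloor n/2\rfloor$).
   Context: For a connected graph $G$ with vertex set $\{v_1,\dots,v_n\}$: $\mathcal{D}(G)=(d_G(v_i,v_j))$ is the distance matrix, $D_i=\sum_j d_G(v_i,v_j)$, $Tr(G)=\mathrm{diag}(D_1,\dots,D_n)$, $\mathcal{Q}(G)=Tr(G)+\mathcal{D}(G)$, and $S_{\mathcal{Q}}(G)$ is the difference between the largest and the least eigenvalue of $\mathcal{Q}(G)$. $K_{a,b}$ is the complete bipartite graph with parts of sizes $a,b$. *)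

(* Defs.v *)
From HB Require Import structures.
From mathcomp Require Import all_boot all_order all_algebra.
From mathcomp Require Import classical_sets reals.
Set Implicit Arguments. Unset Strict Implicit. Unset Printing Implicit Defensive.
Import Order.TTheory GRing.Theory Num.Theory.

(* A simple graph on a finite vertex type T is given by a symmetric irreflexive
   adjacency relation e. *)

Fixpoint within (T : finType) (e : rel T) (k : nat) (x y : T) : bool :=
  match k with
  | 0 => x == y
  | k'.+1 => within e k' x y || [exists z, e x z && within e k' z y]
  end.

(* Graph distance: least k such that y is reachable from x in at most k steps
   (for a connected graph on #|T| vertices this is < #|T|). *)
Definition gdist (T : finType) (e : rel T) (x y : T) : nat :=
  find (fun k => within e k x y) (iota 0 #|T|).

Local Open Scope ring_scope.

Definition distmx (R : nzRingType) (n : nat) (e : rel 'I_n) : 'M[R]_n :=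
  \matrix_(i, j) (gdist e i j)%:R.

Definition trmxG (R : nzRingType) (n : nat) (e : rel 'I_n) : 'M[R]_n :=
  \matrix_(i, j) ((i == j)%:R * \sum_(k < n) (gdist e i k)%:R).

Definition distQ (R : nzRingType) (n : nat) (e : rel 'I_n) : 'M[R]_n :=
  trmxG R e + distmx R e.

Definition spread (R : realType) (n : nat) (A : 'M[R]_n) : R :=
  sup [set l | eigenvalue A l] - inf [set l | eigenvalue A l].

Definition SQ (R : realType) (n : nat) (e : rel 'I_n) : R := spread (distQ R e).

Definition Kbip (n a : nat) : rel 'I_n := fun i j => (i < a)%N != (j < a)%N.
Arguments Kbip : clear implicits.
Arguments SQ : clear implicits.

(* Main.v *)
Require Import Defs.
From mathcomp Require Import all_boot all_order all_algebra.
From mathcomp Require Import classical_sets reals.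
From mathcomp Require Import zify ring lra.
Import Order.TTheory GRing.Theory Num.Theory.

Lemma ex_eq (n a : nat) (i j : 'I_n) :
  [exists z, Kbip n a i z && (z == j)] = Kbip n a i j.
Proof.
apply/existsP/idP => [[z /andP[H /eqP <-]]//|H]; by exists j; rewrite H eqxx.
Qed.

Lemma within1 n a (i j : 'I_n) : within (Kbip n a) 1 i j = (i == j) || Kbip n a i j.
Proof. by rewrite /= ex_eq. Qed.

Lemma gdistK n a (i j : 'I_n) : (3 <= n)%N -> (0 < a < n)%N ->
  gdist (Kbip n a) i j = if i == j then 0%N else if (i < a)%N == (j < a)%N then 2%N else 1%N.
Proof.
move=> n3 /andP[a0 an].
rewrite /gdist card_ord.
have w2 : within (Kbip n a) 2 i j.
  rewrite /= ex_eq; case: (i =P j) => //= _.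
  case ij: (Kbip n a i j) => //=.
  apply/existsP.
  case ia: (i < a)%N.
  - exists (Ordinal an). rewrite ex_eq. rewrite /Kbip /= ltnn ia /=.
    move: ij; rewrite /Kbip ia /=; case: (j < a)%N => // _; rewrite ?orbT //.

  - have z0n : (0 < n)%N by apply: ltn_trans an.
    exists (Ordinal z0n); rewrite ex_eq /Kbip /= a0 ia /=.
    move: ij; rewrite /Kbip ia /=; case: (j < a)%N => // _; rewrite ?orbT //.
have -> : iota 0 n = 0 :: 1 :: 2 :: iota 3 (n-3) by rewrite -{1}(subnKC n3) iotaD.
rewrite /=.
rewrite ex_eq.
case: (i =P j) => //= ij.
move: w2; rewrite /= ex_eq; case: (i =P j) => // _ /=.
case K: (Kbip n a i j) => /= w2.
  by move: K; rewrite /Kbip => /negbTE ->.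
rewrite w2; move: K; rewrite /Kbip => /negbFE ->.
by [].
Qed.

Local Open Scope ring_scope.

Lemma sum_ind (R : nzRingType) (n a : nat) (c d : R) : (a <= n)%N ->
  \sum_(i < n) (if (i < a)%N then c else d) = c *+ a + d *+ (n - a).
Proof.
move=> an.
rewrite -(big_mkord xpredT (fun i => if (i < a)%N then c else d)).
rewrite (@big_cat_nat _ _ _ a) //=.
rewrite (eq_big_nat _ _ (F2 := fun=> c)); last by move=> i /andP[_ ->].
rewrite [X in _ + X](eq_big_nat _ _ (F2 := fun=> d)); last first.
  by move=> i /andP[ai _]; rewrite ltnNge ai.
by rewrite !sumr_const_nat subn0.
Qed.

Definition sameb n a (i j : 'I_n) : bool := (i < a)%N == (j < a)%N.

Lemma dR (R : comNzRingType) n a (i j : 'I_n) : (3 <= n)%N -> (0 < a < n)%N ->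
  (gdist (Kbip n a) i j)%:R = 1 + (@sameb n a i j)%:R - 2 * (i == j)%:R :> R.
Proof.
move=> n3 an; rewrite gdistK // /sameb.
case: (i =P j) => [->|_]; first by rewrite eqxx /=; ring.
by case: ((i < a)%N == (j < a)%N) => /=; ring.
Qed.

Lemma sum_delta (R : nzRingType) n (F : 'I_n -> R) j :
  \sum_(i < n) F i * (i == j)%:R = F j.
Proof.
rewrite (bigD1 j) //= eqxx mulr1 big1 ?addr0 // => i /negbTE ->; by rewrite mulr0.
Qed.

Lemma sum_delta' (R : nzRingType) n (F : 'I_n -> R) j :
  \sum_(i < n) F i * (j == i)%:R = F j.
Proof. by under eq_bigr => i _ do rewrite eq_sym; apply: sum_delta. Qed.

Lemma mulQ (R : comNzRingType) n a (v : 'rV[R]_n) (j : 'I_n) :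
  (3 <= n)%N -> (0 < a < n)%N ->
  (v *m distQ R (Kbip n a)) 0 j =
    (n%:R + \sum_(k < n) (@sameb n a j k)%:R - 4) * v 0 j
    + \sum_(i < n) v 0 i + \sum_(i < n) v 0 i * (@sameb n a i j)%:R.
Proof.
move=> n3 an; rewrite mxE.
under eq_bigr => i _ do rewrite /distQ !mxE dR // mulrDr.
rewrite big_split /=.
under eq_bigr => i _ do rewrite [(i == j)%:R * _]mulrC mulrA.
rewrite sum_delta.
under eq_bigr => k _ do rewrite dR //.
under [X in _ + X]eq_bigr => i _ do rewrite mulrBr mulrDr mulr1 [_ * (2 * _)]mulrCA.
have E1 : \sum_(k < n) (1 + (@sameb n a j k)%:R - 2 * (j == k)%:R) =
   n%:R + \sum_(k < n) (@sameb n a j k)%:R - 2 :> R.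
  rewrite sumrB big_split /= sumr_const card_ord.
  by rewrite (@sum_delta' _ _ (fun=> 2)).

have E2 : \sum_(i < n)
     (v 0 i + v 0 i * (@sameb n a i j)%:R - 2 * (v 0 i * (i == j)%:R)) =
   \sum_(i < n) v 0 i + \sum_(i < n) v 0 i * (@sameb n a i j)%:R - 2 * v 0 j.
  by rewrite sumrB big_split /= -mulr_sumr sum_delta.
rewrite E1 E2.
ring.
Qed.

Lemma pa_sum (R : nzRingType) n a (j : 'I_n) : (a <= n)%N ->
  \sum_(k < n) (@sameb n a j k)%:R = if (j < a)%N then a%:R else (n - a)%:R :> R.
Proof.
move=> an; rewrite /sameb.
case: (j < a)%N.
  rewrite (eq_bigr (fun k : 'I_n => if (k < a)%N then 1 else 0)); last first.
    by move=> k _; case: (k < a)%N.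
  by rewrite sum_ind // mul0rn addr0.
rewrite (eq_bigr (fun k : 'I_n => if (k < a)%N then 0 else 1)); last first.
  by move=> k _; case: (k < a)%N.
by rewrite sum_ind // mul0rn add0r.
Qed.

Lemma sp_sum (R : comNzRingType) n a (v : 'rV[R]_n) (j : 'I_n) :
  \sum_(i < n) v 0 i * (@sameb n a i j)%:R =
  if (j < a)%N then \sum_(i < n) v 0 i * ((i < a)%N)%:R
  else \sum_(i < n) v 0 i - \sum_(i < n) v 0 i * ((i < a)%N)%:R.
Proof.
rewrite /sameb; case: (j < a)%N.
  by apply: eq_bigr => i _; case: (i < a)%N.
rewrite -sumrB; apply: eq_bigr => i _; case: (i < a)%N => /=; ring.
Qed.

Lemma rowQ (R : comNzRingType) n a (v : 'rV[R]_n) (j : 'I_n) :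
  (3 <= n)%N -> (0 < a < n)%N ->
  (v *m distQ R (Kbip n a)) 0 j =
  if (j < a)%N then
    (n%:R + a%:R - 4) * v 0 j + \sum_(i < n) v 0 i + \sum_(i < n) v 0 i * ((i < a)%N)%:R
  else (n%:R + (n - a)%:R - 4) * v 0 j + \sum_(i < n) v 0 i
         + (\sum_(i < n) v 0 i - \sum_(i < n) v 0 i * ((i < a)%N)%:R).
Proof.
move=> n3 an; have an' : (a <= n)%N by case/andP: an => _ /ltnW.
rewrite mulQ // pa_sum // sp_sum; by case: (j < a)%N.
Qed.

Lemma eig_char (R : realType) n a (l : R) : (3 <= n)%N -> (0 < a < n)%N ->
  eigenvalue (distQ R (Kbip n a)) l ->
  l = n%:R + a%:R - 4 \/ l = n%:R + (n - a)%:R - 4 \/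
  (l - (n%:R + 3 * a%:R - 4)) * (l - (n%:R + 3 * (n - a)%:R - 4)) = a%:R * (n - a)%:R.
Proof.
move=> n3 an /eigenvalueP [v Hv v0].
have an' : (a <= n)%N by case/andP: an => _ /ltnW.
have bpos : (0 < n - a)%N by rewrite subn_gt0; case/andP: an.
have apos : (0 < a)%N by case/andP: an.
set S := \sum_(i < n) v 0 i.
set SA := \sum_(i < n) v 0 i * ((i < a)%N)%:R.
set al := n%:R + a%:R - 4 : R.
set be := n%:R + (n - a)%:R - 4 : R.
have Ej j : l * v 0 j = if (j < a)%N then al * v 0 j + S + SA
                        else be * v 0 j + S + (S - SA).
  by rewrite -rowQ // Hv mxE.
case: (eqVneq l al) => [->|nal]; first by left.
case: (eqVneq l be) => [->|nbe]; first by right; left.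
right; right.
set cA := (S + SA) / (l - al).
set cB := (S + (S - SA)) / (l - be).
have lal : l - al != 0 by rewrite subr_eq0.
have lbe : l - be != 0 by rewrite subr_eq0.
have EA : (l - al) * cA = S + SA by rewrite /cA mulrC mulfVK.
have EB : (l - be) * cB = S + (S - SA) by rewrite /cB mulrC mulfVK.
have Vj j : v 0 j = if (j < a)%N then cA else cB.
  have := Ej j; case: (j < a)%N => E.
    have E' : (l - al) * v 0 j = S + SA by rewrite mulrBl E; ring.
    by rewrite /cA -E' [_ * v 0 j]mulrC mulfK.
  have E' : (l - be) * v 0 j = S + (S - SA) by rewrite mulrBl E; ring.
  by rewrite /cB -E' [_ * v 0 j]mulrC mulfK.
clearbody cA cB.
have ES : S = a%:R * cA + (n - a)%:R * cB.
  rewrite /S (eq_bigr (fun i : 'I_n => if (i < a)%N then cA else cB)); last by move=> i _; apply: Vj.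
  by rewrite sum_ind // !mulr_natl.
have ESA : SA = a%:R * cA.
  rewrite /SA (eq_bigr (fun i : 'I_n => if (i < a)%N then cA else 0)).
    by rewrite sum_ind // mul0rn addr0 mulr_natl.
  by move=> i _; rewrite Vj; case: (i < a)%N => /=; rewrite ?mulr1 ?mulr0.
clearbody S SA.
rewrite ES ESA in EA EB.
have cAB : (cA != 0) || (cB != 0).
  apply: contraNT v0 => /norP [/negbNE/eqP hA /negbNE/eqP hB].
  apply/eqP/rowP => j; rewrite Vj !mxE; by case: (j < a)%N.
have E1 : (l - (n%:R + 3 * a%:R - 4)) * cA - (n - a)%:R * cB = 0.
  rewrite (_ : l - _ = (l - al) - 2 * a%:R); last by rewrite /al; ring.
  by rewrite mulrBl EA; ring.
have E2 : (l - (n%:R + 3 * (n - a)%:R - 4)) * cB - a%:R * cA = 0.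
  rewrite (_ : l - _ = (l - be) - 2 * (n - a)%:R); last by rewrite /be; ring.
  by rewrite mulrBl EB; ring.
set X := (l - (n%:R + 3 * a%:R - 4)) * (l - (n%:R + 3 * (n - a)%:R - 4)) - a%:R * (n - a)%:R.
have XA : X * cA = 0.
  rewrite (_ : X * cA = (l - (n%:R + 3 * (n - a)%:R - 4)) * ((l - (n%:R + 3 * a%:R - 4)) * cA - (n - a)%:R * cB) + (n - a)%:R * ((l - (n%:R + 3 * (n - a)%:R - 4)) * cB - a%:R * cA)); last by rewrite /X; ring.
  by rewrite E1 E2; ring.
have XB : X * cB = 0.
  rewrite (_ : X * cB = (l - (n%:R + 3 * a%:R - 4)) * ((l - (n%:R + 3 * (n - a)%:R - 4)) * cB - a%:R * cA) + a%:R * ((l - (n%:R + 3 * a%:R - 4)) * cA - (n - a)%:R * cB)); last by rewrite /X; ring.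
  by rewrite E1 E2; ring.
apply/eqP; rewrite -subr_eq0 -/X.
case/orP: cAB => [cA0|cB0].
  by move/eqP: XA; rewrite mulf_eq0 (negbTE cA0) orbF.
by move/eqP: XB; rewrite mulf_eq0 (negbTE cB0) orbF.
Qed.

Lemma sum_pair (R : comNzRingType) n (F : 'I_n -> R) (i0 i1 : 'I_n) :
  \sum_(i < n) F i * ((i == i0)%:R - (i == i1)%:R) = F i0 - F i1.
Proof. by under eq_bigr => i _ do rewrite mulrBr; rewrite sumrB !sum_delta. Qed.

Lemma eig_alpha (R : realType) n a : (3 <= n)%N -> (2 <= a < n)%N ->
  eigenvalue (distQ R (Kbip n a)) (n%:R + a%:R - 4).
Proof.
move=> n3 /andP[a2 an].
have an2 : (0 < a < n)%N by rewrite an (leq_trans _ a2).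
have h0 : (0 < n)%N by apply: leq_trans n3.
have h1 : (1 < n)%N by apply: leq_trans n3.
pose i0 := Ordinal h0; pose i1 := Ordinal h1.
apply/eigenvalueP; exists (\row_i ((i == i0)%:R - (i == i1)%:R)); last first.
  apply/eqP => /rowP /(_ i0); rewrite !mxE eqxx.
  by rewrite (_ : (i0 == i1) = false) // subr0 => /eqP; rewrite oner_eq0.
apply/rowP => j; rewrite rowQ // !mxE.
have S0 : \sum_(i < n) (\row_i ((i == i0)%:R - (i == i1)%:R) : 'rV[R]_n) 0 i = 0.
  rewrite (eq_bigr (fun i : 'I_n => 1 * ((i == i0)%:R - (i == i1)%:R))); last by move=> i _; rewrite mxE mul1r.
  by rewrite (@sum_pair R n (fun=> 1)) subrr.
have SA0 : \sum_(i < n) (\row_i ((i == i0)%:R - (i == i1)%:R) : 'rV[R]_n) 0 i * ((i < a)%N)%:R = 0.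
  under eq_bigr => i _ do rewrite mxE mulrC.
  rewrite (@sum_pair R n (fun i : 'I_n => ((i < a)%N)%:R)) /=.
  by rewrite (leq_trans _ a2) // (leq_trans _ a2) // subrr.
rewrite S0 SA0 !addr0 subr0.
case: (ltnP j a) => // ja.
rewrite (_ : (j == i0) = false); last by apply/negbTE; apply: contraTneq ja => ->; rewrite -ltnNge (leq_trans _ a2).
rewrite (_ : (j == i1) = false); last by apply/negbTE; apply: contraTneq ja => ->; rewrite -ltnNge.
by rewrite subrr !mulr0 addr0.
Qed.

Lemma eig_quad (R : realType) n a (l : R) : (3 <= n)%N -> (0 < a < n)%N ->
  (l - (n%:R + 3 * a%:R - 4)) * (l - (n%:R + 3 * (n - a)%:R - 4)) = a%:R * (n - a)%:R ->
  eigenvalue (distQ R (Kbip n a)) l.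
Proof.
move=> n3 an H.
have an' : (a <= n)%N by case/andP: an => _ /ltnW.
have apos : (0 < a)%N by case/andP: an.
have bpos : (0 < n - a)%N by rewrite subn_gt0; case/andP: an.
pose v : 'rV[R]_n := \row_i (if (i < a)%N then (n - a)%:R else l - (n%:R + 3 * a%:R - 4)).
apply/eigenvalueP; exists v; last first.
  apply/eqP => /rowP /(_ (Ordinal (ltn_trans apos (proj2 (andP an))))).
  rewrite !mxE /= apos => /eqP; rewrite pnatr_eq0 => /eqP h; by rewrite h in bpos.
have S0 : \sum_(i < n) v 0 i = a%:R * (n - a)%:R + (n - a)%:R * (l - (n%:R + 3 * a%:R - 4)).
  rewrite (eq_bigr (fun i : 'I_n => if (i < a)%N then (n - a)%:R else l - (n%:R + 3 * a%:R - 4))); last by move=> i _; rewrite mxE.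
  by rewrite sum_ind // !mulr_natl.
have SA0 : \sum_(i < n) v 0 i * ((i < a)%N)%:R = a%:R * (n - a)%:R.
  rewrite (eq_bigr (fun i : 'I_n => if (i < a)%N then (n - a)%:R else 0)).
    by rewrite sum_ind // mul0rn addr0 mulr_natl.
  by move=> i _; rewrite mxE; case: (i < a)%N; rewrite /= ?mulr1 ?mulr0.
apply/rowP => j; rewrite rowQ // S0 SA0 !mxE.
case: (j < a)%N; first by ring.
apply/eqP; rewrite -subr_eq0; apply/eqP.
transitivity (a%:R * (n - a)%:R -
   (l - (n%:R + 3 * a%:R - 4)) * (l - (n%:R + 3 * (n - a)%:R - 4))); first by ring.
by rewrite H subrr.
Qed.
Lemma sup_eq (R : realType) (E : set R) M : E M -> (forall y, E y -> y <= M) -> sup E = M.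
Proof.
move=> EM ub; apply/eqP; rewrite eq_le; apply/andP; split.
  by apply: ge_sup; [exists M | move=> y /ub].
have hE : has_ubound E by exists M => y /ub.
exact: (ub_le_sup hE).
Qed.

Lemma inf_eq (R : realType) (E : set R) m : E m -> (forall y, E y -> m <= y) -> inf E = m.
Proof.
move=> Em lb; apply/eqP; rewrite eq_le; apply/andP; split.
  have hE : has_lbound E by exists m => y /lb.
  exact: (ge_inf hE).
by apply: lb_le_inf; [exists m | move=> y /lb].
Qed.

Lemma aux_ne (R : realType) (N : R) (p q : R) : 4 <= N -> 0 < p -> q < 4 * p -> q - p * N != 0.
Proof. move=> h1 h2 h3; apply/eqP => h; nra. Qed.

Lemma no_alpha1 (R : realType) n : (4 <= n)%N ->
  ~ eigenvalue (distQ R (Kbip n 1)) (n%:R + 1%:R - 4).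
Proof.
move=> n4 /eigenvalueP [v Hv v0].
have n3 : (3 <= n)%N by apply: ltnW.
have an : (0 < 1 < n)%N by rewrite /= (leq_trans _ n4).
have h0 : (0 < n)%N by apply: leq_trans n4.
pose i0 := Ordinal h0.
set S := \sum_(i < n) v 0 i.
set SA := \sum_(i < n) v 0 i * ((i < 1)%N)%:R.
have Ej j : (n%:R + 1%:R - 4) * v 0 j = if (j < 1)%N then (n%:R + 1%:R - 4) * v 0 j + S + SA
                        else (n%:R + (n - 1)%:R - 4) * v 0 j + S + (S - SA).
  by rewrite -rowQ // Hv mxE.
have Nge : (4 : R) <= n%:R by rewrite (ler_nat R 4 n).
have nB : (n - 1)%:R = n%:R - 1 :> R by rewrite natrB // (leq_trans _ n4).
have d0 : (2 - n%:R : R) != 0 by rewrite -[n%:R]mul1r aux_ne //; lra.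
set c := (2 * S - SA) / (2 - n%:R).
have Vj j : v 0 j = if (j < 1)%N then v 0 i0 else c.
  case: ltnP => j1.
    by congr (v 0 _); apply: val_inj => /=; case: (nat_of_ord j) j1.
  have := Ej j; rewrite ltnNge j1 /= nB => E.
  have E' : (2 - n%:R) * v 0 j = 2 * S - SA.
    transitivity ((n%:R + 1%:R - 4) * v 0 j - (n%:R + (n%:R - 1) - 4) * v 0 j); first by ring.
    by rewrite E; ring.
  by rewrite /c -E' [_ * v 0 j]mulrC mulfK.
have EA : (2 - n%:R) * c = 2 * S - SA by rewrite /c mulrC mulfVK.
have E0 := Ej i0; rewrite /= in E0.
clearbody c.
have ES : S = v 0 i0 + (n - 1)%:R * c.
  rewrite /S (eq_bigr (fun i : 'I_n => if (i < 1)%N then v 0 i0 else c)); last by move=> i _; apply: Vj.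
  by rewrite sum_ind ?(leq_trans _ n4) // mulr1n mulr_natl.
have ESA : SA = v 0 i0.
  rewrite /SA (eq_bigr (fun i : 'I_n => if (i < 1)%N then v 0 i0 else 0)).
    by rewrite sum_ind ?(leq_trans _ n4) // mul0rn addr0 mulr1n.
  by move=> i _; rewrite Vj; case: (i < 1)%N; rewrite /= ?mulr1 ?mulr0.
clearbody S SA.
rewrite ES ESA nB in EA E0.
have c0 : c = 0.
  have : (7 - 5 * n%:R) * c = 0.
    have E0' : 2 * v 0 i0 + (n%:R - 1) * c = 0.
      transitivity ((n%:R + 1%:R - 4) * v 0 i0 + (v 0 i0 + (n%:R - 1) * c) + v 0 i0 - (n%:R + 1%:R - 4) * v 0 i0); first by ring.
      by rewrite -E0; ring.
    have : v 0 i0 = (4 - 3 * n%:R) * c.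
      apply/eqP; rewrite -subr_eq0; apply/eqP.
      transitivity (- ((2 - n%:R) * c - (2 * (v 0 i0 + (n%:R - 1) * c) - v 0 i0))); first by ring.
      by rewrite EA subrr oppr0.
    move=> hv; rewrite hv in E0'.
    by rewrite -E0'; ring.
  move/eqP; rewrite mulf_eq0 => /orP [h|/eqP //].
  by move: h; rewrite (negbTE (@aux_ne R n%:R 5 7 _ _ _)) //; lra.
have v00 : v 0 i0 = 0.
  have E0' : 2 * v 0 i0 + (n%:R - 1) * c = 0.
    transitivity ((n%:R + 1%:R - 4) * v 0 i0 + (v 0 i0 + (n%:R - 1) * c) + v 0 i0 - (n%:R + 1%:R - 4) * v 0 i0); first by ring.
    by rewrite -E0; ring.
  by move: E0'; rewrite c0 mulr0 addr0 => /eqP; rewrite mulf_eq0 pnatr_eq0 /= => /eqP.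
apply: (negP v0); apply/eqP/rowP => j; rewrite Vj !mxE; by case: (j < 1)%N.
Qed.

Section Quad.
Variable R : realType.
Variables n a : nat.
Definition xx : R := n%:R + 3 * a%:R - 4.
Definition yy : R := n%:R + 3 * (n - a)%:R - 4.
Definition DD : R := (xx - yy) ^+ 2 + 4 * (a%:R * (n - a)%:R).
Definition ss : R := Num.sqrt DD.
Definition lp : R := (xx + yy + ss) / 2.
Definition lm : R := (xx + yy - ss) / 2.

Lemma DD_ge0 : 0 <= DD.
Proof. by rewrite /DD addr_ge0 ?sqr_ge0 // mulr_ge0 // mulr_ge0. Qed.

Lemma ss_ge0 : 0 <= ss. Proof. exact: sqrtr_ge0. Qed.
Lemma ss_sq : ss ^+ 2 = DD. Proof. by rewrite sqr_sqrtr // DD_ge0. Qed.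

Lemma quad_id (l : R) : (l - lp) * (l - lm) = (l - xx) * (l - yy) - a%:R * (n - a)%:R.
Proof.
have h : ss ^+ 2 = DD := ss_sq.
rewrite /lp /lm.
transitivity ((l - xx) * (l - yy) - a%:R * (n - a)%:R + (DD - ss ^+ 2) / 4).
  by rewrite /DD; field.
by rewrite h subrr mul0r addr0.
Qed.

Lemma root_lp : (lp - xx) * (lp - yy) = a%:R * (n - a)%:R.
Proof. by apply/eqP; rewrite -subr_eq0 -quad_id subrr mul0r. Qed.
Lemma root_lm : (lm - xx) * (lm - yy) = a%:R * (n - a)%:R.
Proof. by apply/eqP; rewrite -subr_eq0 -quad_id subrr mulr0. Qed.
Lemma root_char (l : R) : (l - xx) * (l - yy) = a%:R * (n - a)%:R -> l = lp \/ l = lm.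
Proof.
move=> h; have : (l - lp) * (l - lm) = 0 by rewrite quad_id h subrr.
move/eqP; rewrite mulf_eq0 => /orP [|] /eqP /subr0_eq; by [left|right].
Qed.
End Quad.

Lemma forms (R : realType) n a : (a <= n)%N ->
  [/\ lp R n a = (5 * n%:R - 8 + ss R n a) / 2, lm R n a = (5 * n%:R - 8 - ss R n a) / 2,
      ss R n a ^+ 2 = (6 * a%:R - 3 * n%:R) ^+ 2 + 4 * a%:R * (n%:R - a%:R) &
      0 <= ss R n a].
Proof.
move=> an; have nB : (n - a)%:R = n%:R - a%:R :> R by rewrite natrB.
split; last exact: ss_ge0.
- by rewrite /lp /xx /yy nB; congr (_ / _); ring.
- by rewrite /lm /xx /yy nB; congr (_ / _); ring.
- by rewrite ss_sq /DD /xx /yy nB; ring.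
Qed.

Lemma SQ_val2 (R : realType) n a : (4 <= n)%N -> (2 <= a)%N -> (2 * a <= n)%N ->
  SQ R n (Kbip n a) = (3 * n%:R - 2 * a%:R + ss R n a) / 2.
Proof.
move=> n4 a2 an2.
have an : (a <= n)%N by lia.
have an3 : (0 < a < n)%N by apply/andP; split; lia.
have n3 : (3 <= n)%N by lia.
have [Elp Elm Es s0] := @forms R n a an.
have nB : (n - a)%:R = n%:R - a%:R :> R by rewrite natrB.
have N4 : (4 : R) <= n%:R by rewrite (ler_nat R 4 n).
have A2 : (2 : R) <= a%:R by rewrite (ler_nat R 2 a).
have NA : 2 * a%:R <= n%:R :> R by rewrite -natrM (ler_nat R).
rewrite /SQ /spread.
rewrite (@sup_eq _ _ (lp R n a)); last first.
  move=> y /eig_char [] // => [->|[->|/root_char [->|->]]].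
  - rewrite Elp; lra.
  - rewrite Elp nB; lra.
  - by [].
  - rewrite Elp Elm; lra.
- by apply: eig_quad => //; apply: root_lp.
rewrite (@inf_eq _ _ (n%:R + a%:R - 4)); last first.
  move=> y /eig_char [] // => [->|[->|/root_char [->|->]]].
  - by [].
  - rewrite nB; lra.
  - rewrite Elp; lra.
  - rewrite Elm; nra.
- by apply: eig_alpha => //; apply/andP; split; lia.
by rewrite Elp; field.
Qed.

Lemma SQ_val1 (R : realType) n : (4 <= n)%N -> SQ R n (Kbip n 1) = ss R n 1.
Proof.
move=> n4.
have an : (1 <= n)%N by lia.
have an3 : (0 < 1 < n)%N by apply/andP; split; lia.
have n3 : (3 <= n)%N by lia.
have [Elp Elm Es s0] := @forms R n 1 an.
have nB : (n - 1)%:R = n%:R - 1 :> R by rewrite natrB.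
have N4 : (4 : R) <= n%:R by rewrite (ler_nat R 4 n).
rewrite /SQ /spread.
rewrite (@sup_eq _ _ (lp R n 1)); last first.
  move=> y /eig_char [] // => [->|[->|/root_char [->|->]]].
  - rewrite Elp; lra.
  - rewrite Elp nB; lra.
  - by [].
  - rewrite Elp Elm; lra.
- by apply: eig_quad => //; apply: root_lp.
rewrite (@inf_eq _ _ (lm R n 1)); last first.
  move=> y Ey; case: (@eig_char R n 1 y n3 an3 Ey) => [E|[->|/root_char [->|->]]].
  - by exfalso; apply: (@no_alpha1 R n n4); rewrite -E.
  - rewrite Elm nB; nra.
  - rewrite Elp Elm; lra.
  - by [].
- by apply: eig_quad => //; apply: root_lm.
by rewrite Elp Elm; field.
Qed.

Lemma main_real (R : realType) n a : (4 <= n)%N -> (0 < a)%N -> (2 * a <= n)%N ->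
  SQ R n (Kbip n (n./2)) <= SQ R n (Kbip n a) /\
  (SQ R n (Kbip n a) = SQ R n (Kbip n (n./2)) <-> a = n./2).
Proof.
move=> n4 a0 an2.
have m2 : (2 <= n./2)%N by rewrite -divn2; lia.
have mn : (2 * n./2 <= n)%N by rewrite -divn2; lia.
have am : (a <= n./2)%N by rewrite -divn2; lia.
rewrite (@SQ_val2 R n (n./2) n4 m2 mn).
have N4 : (4 : R) <= n%:R by rewrite (ler_nat R 4 n).
have M2 : (2 : R) <= (n./2)%:R by rewrite (ler_nat R 2).
have MN : 2 * (n./2)%:R <= n%:R :> R by rewrite -natrM (ler_nat R).
have mle : (n./2 <= n)%N by lia.
have [_ _ Esm sm0] := @forms R n (n./2) mle.
move: Esm sm0 M2 MN; set sm := ss R n (n./2); set M := (n./2)%:R => Esm sm0 M2 MN.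
have [a1|a2] : a = 1%N \/ (2 <= a)%N by lia.
  subst a; rewrite (@SQ_val1 R n n4).
  have [_ _ Es1 s10] := @forms R n 1 (leq_trans (isT : (1 <= 4)%N) n4).
  move: Es1 s10; set s1 := ss R n 1 => Es1 s10.
  have hm : sm <= 3 * n%:R - 8.
    have h1 : 0 <= (M - 2) * (n%:R - M - 2) by apply: mulr_ge0; lra.
    nra.
  have h1 : 3 * n%:R - 6 < s1 by nra.
  have lt : (3 * n%:R - 2 * M + sm) / 2 < s1 by lra.
  split; first by apply: ltW.
  split => [h|h]; last by lia.
  by move: lt; rewrite h ltxx.
rewrite (@SQ_val2 R n a n4 a2 an2).
have aln : (a <= n)%N by lia.
have [_ _ Esa sa0] := @forms R n a aln.
move: Esa sa0; set sa := ss R n a => Esa sa0.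
have AM : a%:R <= M :> R by rewrite (ler_nat R).
have A2 : (2 : R) <= a%:R by rewrite (ler_nat R 2).
have h1 : 0 <= (M - a%:R) * (n%:R - M - a%:R) by apply: mulr_ge0; lra.
have hsq : sm ^+ 2 <= sa ^+ 2 by rewrite Esa Esm; nra.
have hs : sm <= sa by nra.
split; first lra.
split => [h|ha]; last by rewrite /sa /sm /M ha.
apply/eqP; rewrite eqn_leq am /=.
rewrite -(ler_nat R); lra.
Qed.

Theorem lemma4p3 (R : realType) (n a : nat) :
  (4 <= n)%N -> (0 < a)%N -> (2 * a <= n)%N ->
  SQ R n (Kbip n (n./2)) <= SQ R n (Kbip n a) /\
  (SQ R n (Kbip n a) = SQ R n (Kbip n (n./2)) <-> a = n./2).
Proof. exact: main_real. Qed.
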